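(* Let $X$ be an $n$-dimensional real normed space. Suppose that $Y, X_0 \subseteq X$ are linear subspaces such that $Y_0 =X_0 \cap Y$ is non-empty and $\lambda(Y_0, Y)=1$. Then $\lambda(Y, X) \geq \lambda(Y_0, X_0)$.
   Context: For a linear subspace $V$ of a normed space $W$, a projection onto $V$ is a linear $P:W\to V$ with $P|_V=\mathrm{id}_V$, and $\lambda(V,W)$ is the infimum of the operator norms of such projections. *)

(* Defs.v *)
(* X is modelled as 'rV[R]_n with an arbitrary norm N.
   Every n-dimensional real normed space is isometric to such a space. *)
From mathcomp Require Import all_boot all_order all_algebra.
From mathcomp Require Import classical_sets reals.
Set Implicit Arguments. Unset Strict Implicit. Unset Printing Implicit Defensive.
Import Order.TTheory GRing.Theory Num.Theory.
Local Open Scope ring_scope.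
Local Open Scope classical_set_scope.

Definition is_norm (R : realType) (n : nat) (N : 'rV[R]_n -> R) : Prop :=
  [/\ (forall x, 0 <= N x),
      (forall x, N x = 0 -> x = 0),
      (forall (a : R) x, N (a *: x) = `|a| * N x)
    & (forall x y, N (x + y) <= N x + N y)].

(* Subspaces of 'rV_n are represented by square matrices (their row space).
   A linear map W -> 'rV_n is represented by a matrix A acting by w |-> w *m A. *)
Definition is_projection (R : realType) (n : nat) (V W A : 'M[R]_n) : Prop :=
  (W *m A <= V)%MS /\ (forall v : 'rV[R]_n, (v <= V)%MS -> v *m A = v).

Definition opnorm (R : realType) (n : nat) (N : 'rV[R]_n -> R) (W A : 'M[R]_n) : R :=
  sup [set N (w *m A) | w in [set w : 'rV[R]_n | (w <= W)%MS /\ N w <= 1]].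

Definition proj_const (R : realType) (n : nat) (N : 'rV[R]_n -> R) (V W : 'M[R]_n) : R :=
  inf [set opnorm N W A | A in [set A : 'M[R]_n | is_projection V W A]].

(* Main.v *)
Require Import Defs.
From mathcomp Require Import all_boot all_order all_algebra.
From mathcomp Require Import classical_sets reals.
From mathcomp Require Import all_classical all_reals all_analysis.
From mathcomp Require Import lra.
Import Order.TTheory GRing.Theory Num.Theory.
Import numFieldNormedType.Exports.
Local Open Scope classical_set_scope.
Local Open Scope ring_scope.

Section NE.
Variables (R : realType) (n : nat).

Lemma coord_le (x : 'rV[R]_n) i : `|x 0 i| <= `|x|.
Proof.
rewrite (_ : `|x| = mx_norm x) // mx_normrE.
have -> : x 0 i = x (@ord0 0, i).1 (@ord0 0, i).2 :> R by [].
exact: (le_bigmax _ (fun ij : 'I_1 * 'I_n => `|x ij.1 ij.2|) (@ord0 0, i)).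
Qed.

Lemma seminorm_upper (M : 'rV[R]_n -> R) :
  (forall x, 0 <= M x) ->
  (forall (a : R) x, M (a *: x) = `|a| * M x) ->
  (forall x y, M (x + y) <= M x + M y) ->
  forall x, M x <= (\sum_(j < n) M (delta_mx 0 j)) * `|x|.
Proof.
move=> M0 MZ MD x.
have M00 : M 0 = 0 by rewrite -(scale0r 0) MZ normr0 mul0r.
rewrite {1}(row_sum_delta x) mulr_suml.
elim/big_rec2: _ => [|j y z _ Hyz]; first by rewrite M00.
apply: le_trans (MD _ _) _; rewrite mulrC; apply: lerD => //.
by rewrite MZ ler_wpM2r // coord_le.
Qed.
End NE.

Section NE2.
Variables (R : realType) (n : nat) (N : 'rV[R]_n -> R).
Hypotheses (N0 : forall x, 0 <= N x) (Neq0 : forall x, N x = 0 -> x = 0)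
  (NZ : forall (a : R) x, N (a *: x) = `|a| * N x)
  (ND : forall x y, N (x + y) <= N x + N y).

Let K := \sum_(j < n) N (delta_mx 0 j).
Lemma K_ge0 : 0 <= K. Proof. by apply: sumr_ge0 => i _. Qed.

Lemma N_up x : N x <= K * `|x|.
Proof. exact: seminorm_upper. Qed.

Lemma N_dist x y : `|N x - N y| <= K * `|x - y|.
Proof.
apply: le_trans (N_up _).
have Nxy : N (y - x) = N (x - y) by rewrite -opprB -scaleN1r NZ normrN normr1 mul1r.
rewrite ler_norml; apply/andP; split.
  have := ND (y - x) x; rewrite subrK Nxy => h.
  lra.
by have := ND (x - y) y; rewrite subrK => h; lra.
Qed.

Lemma N_cont : continuous N.
Proof.
move=> x; apply/(@cvgrPdist_lt _ _ _ (nbhs x) (nbhs_filter x)) => e e0.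
have K1 : 0 < K + 1 by rewrite ltr_wpDl // K_ge0.
near=> y.
apply: (le_lt_trans (N_dist _ _)).
apply: (le_lt_trans (y := (K + 1) * `|x - y|)).
  by rewrite ler_wpM2r // lerDl.
rewrite -ltr_pdivlMl //.
near: y.
have := @cvgr_dist_lt _ _ _ (nbhs x) _ id x cvg_id.
by apply; rewrite mulr_gt0 // invr_gt0.
Unshelve. all: by end_near. Qed.

Lemma N_lower : exists2 c, 0 < c & forall x, `|x| <= c * N x.
Proof.
pose S := [set x : 'rV[R]_n | `|x| = 1].
have [S0|/set0P[x0 Sx0]] := eqVneq S set0.
  exists 1 => // x; rewrite mul1r.
  have [->|xn0] := eqVneq x 0; first by rewrite normr0.
  have : S (`|x|^-1 *: x).
    by rewrite /S /= normrZ normrV ?unitfE ?normr_eq0 // normr_id mulVf // normr_eq0.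
  by rewrite S0.
have cS : compact S.
  apply: bounded_closed_compact.
    rewrite /= /bounded_near; near=> M => x Sx /=; rewrite Sx; near: M; exact: nbhs_pinfty_ge.
  rewrite (_ : S = (fun x : 'rV[R]_n => `|x|) @^-1` [set (1:R)]) //.
  apply: closed_comp => [x _|]; first exact: norm_continuous.
  exact: closed_eq.
have [c Sc cmin] : exists2 c, c \in S & forall t, t \in S -> N c <= N t.
  apply: EVT_min_rV => //; first by exists x0.
  by move=> y; apply: continuous_subspaceT => z; exact: N_cont.
have Nc0 : 0 < N c.
  rewrite lt_def N0 andbT; apply/eqP => /Neq0 c0.
  by move: Sc; rewrite inE /S /= c0 normr0 => /eqP; rewrite eq_sym oner_eq0.
exists (N c)^-1; first by rewrite invr_gt0.
move=> x; have [->|xn0] := eqVneq x 0; first by rewrite normr0 mulr_ge0 // ?N0 // invr_ge0 N0.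
have nx0 : 0 < `|x| by rewrite normr_gt0.
have : N c <= N (`|x|^-1 *: x).
  apply: cmin; rewrite inE /S /= normrZ normrV ?unitfE ?normr_eq0 // normr_id mulVf //.
  by rewrite normr_eq0.
rewrite NZ normrV ?unitfE ?normr_eq0 // normr_id.
by rewrite ler_pdivlMl // ler_pdivlMl // mulrC.
Unshelve. all: by end_near. Qed.
End NE2.

Section Op.
Variables (R : realType) (n : nat) (N : 'rV[R]_n -> R).
Hypothesis hN : is_norm N.

Lemma N00 : N 0 = 0.
Proof. by case: hN => _ _ NZ _; rewrite -(scale0r 0) NZ normr0 mul0r. Qed.

Lemma op_bound (A : 'M[R]_n) : exists2 B, 0 <= B & forall w, N (w *m A) <= B * N w.
Proof.
case: hN => N0 Neq0 NZ ND.
have [c c0 hc] := @N_lower R n N N0 Neq0 NZ ND.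
pose KA := \sum_(j < n) N (delta_mx 0 j *m A).
have KA0 : 0 <= KA by apply: sumr_ge0 => i _.
exists (KA * c); first by rewrite mulr_ge0 // ltW.
move=> w.
have hZ : forall (a : R) x, N ((a *: x) *m A) = `|a| * N (x *m A).
  by move=> a x; rewrite -scalemxAl NZ.
have hD : forall x y, N ((x + y) *m A) <= N (x *m A) + N (y *m A).
  by move=> x y; rewrite mulmxDl ND.
have := @seminorm_upper R n (fun w => N (w *m A)) (fun x => N0 _) hZ hD w.
move=> /le_trans; apply; rewrite -mulrA ler_wpM2l //.
Qed.

Definition Eset (W A : 'M[R]_n) :=
  [set N (w *m A) | w in [set w : 'rV[R]_n | (w <= W)%MS /\ N w <= 1]].

Lemma Eset0 W A : Eset W A 0.
Proof. by exists 0; rewrite ?mul0mx ?N00 //; split; [exact: sub0mx | rewrite N00]. Qed.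

Lemma Eset_has_sup W A : has_sup (Eset W A).
Proof.
split; first by exists 0; exact: Eset0.
have [B B0 hB] := op_bound A.
exists B => _ [w [_ Nw1] <-].
apply: le_trans (hB w) _; rewrite -[leRHS]mulr1 ler_wpM2l //.
Qed.

Lemma opnorm_ge0 W A : 0 <= opnorm N W A.
Proof. exact: (sup_upper_bound (Eset_has_sup W A) (Eset0 W A)). Qed.

Lemma opnorm_le W A w : (w <= W)%MS -> N (w *m A) <= opnorm N W A * N w.
Proof.
case: hN => N0 Neq0 NZ ND => wW.
have [->|w0] := eqVneq w 0; first by rewrite mul0mx N00 mulr0.
have Nw0 : 0 < N w by rewrite lt_def N0 andbT; apply/eqP => /Neq0; apply/eqP.
have : Eset W A (N (((N w)^-1 *: w) *m A)).
  exists ((N w)^-1 *: w) => //; split; first exact: scalemx_sub.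
  by rewrite NZ ger0_norm ?invr_ge0 ?N0 // mulVf // gt_eqF.
move/(sup_upper_bound (Eset_has_sup W A)).
rewrite -scalemxAl NZ ger0_norm ?invr_ge0 ?N0 //.
by rewrite ler_pdivrMl // mulrC.
Qed.

Lemma opnorm_leP W A b : 0 <= b ->
  (forall w, (w <= W)%MS -> N (w *m A) <= b * N w) -> opnorm N W A <= b.
Proof.
move=> b0 hb; apply: ge_sup; first by exists 0; exact: Eset0.
move=> _ [w [wW Nw1] <-]; apply: le_trans (hb w wW) _.
by rewrite -[leRHS]mulr1 ler_wpM2l.
Qed.
End Op.

Theorem mainTheorem14 (R : realType) (n : nat) (N : 'rV[R]_n -> R)
  (Y X0 : 'M[R]_n) :
  is_norm N ->
  (exists y0 : 'rV[R]_n, (y0 <= (X0 :&: Y))%MS) ->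
  proj_const N (X0 :&: Y)%MS Y = 1 ->
  proj_const N (X0 :&: Y)%MS X0 <= proj_const N Y 1%:M.
Proof.
move=> hN _ hQ.
have og := @opnorm_ge0 R n N hN.
have ol := @opnorm_le R n N hN.
have olP := @opnorm_leP R n N hN.
set Y0 := (X0 :&: Y)%MS.
set S0 := [set opnorm N X0 A | A in [set A : 'M[R]_n | is_projection Y0 X0 A]].
set SQ := [set opnorm N Y A | A in [set A : 'M[R]_n | is_projection Y0 Y A]].
have lbS0 : has_lbound S0 by exists 0 => _ [A _ <-]; exact: og.
have SQne : SQ !=set0.
  apply/set0P/eqP => SQ0; move: hQ; rewrite /proj_const -/SQ SQ0 inf0 => /eqP.
  by rewrite eq_sym oner_eq0.
apply: lb_le_inf.
  exists (opnorm N 1%:M (proj_mx Y Y^C%MS)), (proj_mx Y Y^C%MS) => //; split.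
    exact: proj_mx_sub.
  by move=> v vY; rewrite proj_mx_id // capmx_compl.
move=> _ [P [P1 PY] <-].
set s := opnorm N 1%:M P.
have s0 : 0 <= s := og _ _.
have PY' : (P <= Y)%MS by move: P1; rewrite mul1mx.
apply/ler_addgt0Pr => e e0.
have d0 : 0 < e / (s + 1) by rewrite divr_gt0 // ltr_wpDl.
have [_ [Q [QY0 QY] <-] oQlt] : exists2 y, SQ y & y < 1 + e / (s + 1).
  by apply: inf_lt => //; rewrite /proj_const -/SQ in hQ; rewrite hQ ltrDl.
set q := opnorm N Y Q in oQlt.
have q0 : 0 <= q := og _ _.
have PQproj : is_projection Y0 X0 (P *m Q).
  split.
    rewrite mulmxA; apply: submx_trans QY0; apply: submxMr.
    exact: submx_trans (submxMl _ _) PY'.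
  move=> v vY0; have vY : (v <= Y)%MS by apply: submx_trans vY0 (capmxSr _ _).
  by rewrite mulmxA PY // QY.
have : inf S0 <= opnorm N X0 (P *m Q).
  by apply: ge_inf => //; exists (P *m Q).
move/le_trans; apply.
apply: (@le_trans _ _ (q * s)).
  apply: olP => //; first exact: mulr_ge0.
  move=> w wX0; rewrite mulmxA.
  apply: le_trans (ol _ Q _ (submx_trans (submxMl w P) PY')) _.
  rewrite -mulrA ler_wpM2l //; exact: ol _ P _ (submx1 w).
have : q * s <= (1 + e / (s + 1)) * s by rewrite ler_wpM2r // ltW.
move/le_trans; apply.
rewrite mulrDl mul1r lerD2l mulrAC ler_pdivrMr ?ltr_wpDl //.
by rewrite mulrDr mulr1 lerDl ltW.
Qed.
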